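(* Let $(N,J,g)$ be a Kähler manifold of complex dimension $2n$ and $F:M\to N$ an immersion of a manifold $M$ of real dimension $2n$, with induced metric $g_M=F^*g$. Let $p_0\in M$ be a point without complex directions, i.e. $\cos\theta_\alpha(p_0)<1$ for all $\alpha$, and let $\{X_\alpha,Y_\alpha\}_{1\le\alpha\le n}$ be a $g_M$-orthonormal basis of $T_{p_0}M$ diagonalizing $F^*\omega$ at $p_0$, with $Z_\alpha=\frac{X_\alpha-iY_\alpha}{2}$, $Z_{\bar\alpha}=\frac{X_\alpha+iY_\alpha}{2}$. Then for all $U,V\in T^{\mathbb C}_{F(p_0)}N$, \[ Ricci^N(U,V)=\sum_{1\le\mu\le n}\frac{4}{\sin^2\theta_\mu}\,R^N\big(U,JV,dF(Z_\mu),\,JdF(Z_{\bar\mu})+i\cos\theta_\mu\, dF(Z_{\bar\mu})\big), \] where $\theta_\mu=\theta_\mu(p_0)$.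
   Context: $\omega(U,V)=g(JU,V)$ is the Kähler form of $N$. At $p\in M$, $F^*\omega$ is identified with a skew-symmetric endomorphism of $T_pM$ via $g_M(F^*\omega(X),Y)=F^*\omega(X,Y)$. A $g_M$-orthonormal basis $X_1,Y_1,\dots,X_n,Y_n$ of $T_pM$ diagonalizes $F^*\omega$ if $F^*\omega(X_\alpha)=\cos\theta_\alpha Y_\alpha$ and $F^*\omega(Y_\alpha)=-\cos\theta_\alpha X_\alpha$ with $1\ge\cos\theta_1\ge\dots\ge\cos\theta_n\ge 0$; the angles $\theta_\alpha\in[0,\pi/2]$ are the Kähler angles of $F$ at $p$. A complex direction at $p$ is a real 2-plane $P\subset T_pM$ with $J\,dF(P)=dF(P)$; $p$ has no complex directions iff $\cos\theta_\alpha(p)<1$ for all $\alpha$. Curvature conventions: $R^N(U,V)W=-\nabla_U\nabla_VW+\nabla_V\nabla_UW+\nabla_{[U,V]}W$, $R^N(U,V,W,Z)=g(R^N(U,V)W,Z)$; $Ricci^N$ is the Ricci tensor of $N$. All tensors ($g$, $R^N$, $Ricci^N$, $dF$, $J$) are extended complex-(multi)linearly to complexified tangent spaces. *)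

(* Defs.v *)
From HB Require Import structures.
From mathcomp Require Import all_boot all_order all_algebra.
From mathcomp Require Import reals trigo.
From mathcomp Require Import complex.

Set Implicit Arguments.
Unset Strict Implicit.
Unset Printing Implicit Defensive.

Import Order.TTheory GRing.Theory Num.Theory.
Local Open Scope ring_scope.

(* T_{F(p0)}N is R^(4n) (column vectors),
   T_{p0}M is R^(2n); complexified tangent spaces are C^(4n), C^(2n) with
   C = R[i].  All tensors are given in these coordinates and are extended
   complex-(multi)linearly. *)

Section Defs.
Variable R : realType.
Local Notation C := (R[i]).

Definition toC (p q : nat) (A : 'M[R]_(p, q)) : 'M[C]_(p, q) :=
  map_mx (real_complex R) A.

Definition gR (m : nat) (G : 'M[R]_m) (u v : 'cV[R]_m) : R := (u^T *m G *m v) 0 0.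
Definition gC (m : nat) (G : 'M[R]_m) (u v : 'cV[C]_m) : C :=
  (u^T *m toC G *m v) 0 0.

(* the (0,4) curvature tensor R^N(U,V,W,Z) = g(R^N(U,V)W,Z) given by its
   real components Rc i j k l, and its complex-multilinear extension *)
Definition RtenR (m : nat) (Rc : 'I_m -> 'I_m -> 'I_m -> 'I_m -> R)
  (u v w z : 'cV[R]_m) : R :=
  \sum_(i < m) \sum_(j < m) \sum_(k < m) \sum_(l < m)
     Rc i j k l * u i 0 * v j 0 * w k 0 * z l 0.
Definition RtenC (m : nat) (Rc : 'I_m -> 'I_m -> 'I_m -> 'I_m -> R)
  (u v w z : 'cV[C]_m) : C :=
  \sum_(i < m) \sum_(j < m) \sum_(k < m) \sum_(l < m)
     ((Rc i j k l)%:C)%C * u i 0 * v j 0 * w k 0 * z l 0.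

(* Ricci tensor: metric contraction Ricci(U,V) = g^{jl} R^N(U, e_j, V, e_l)
   (= sum over a g-orthonormal basis e_a of R^N(U,e_a,V,e_a); with the
   curvature sign convention of the paper this is the usual Ricci tensor). *)
Definition RicciC (m : nat) (G : 'M[R]_m) (Rc : 'I_m -> 'I_m -> 'I_m -> 'I_m -> R)
  (U V : 'cV[C]_m) : C :=
  \sum_(j < m) \sum_(l < m)
     (((invmx G) j l)%:C)%C * RtenC Rc U (delta_mx j 0) V (delta_mx l 0).

(* (G, J, Rc) is the data at a point of a Kaehler manifold:
   g positive definite symmetric, J an orthogonal complex structure,
   R^N an algebraic curvature tensor (skew-symmetries, first Bianchi
   identity) which is J-invariant (consequence of nabla J = 0). *)
Definition kaehler_point (m : nat) (G J : 'M[R]_m)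
  (Rc : 'I_m -> 'I_m -> 'I_m -> 'I_m -> R) : Prop :=
  [/\ G^T = G,
      (forall v : 'cV[R]_m, v != 0 -> 0 < gR G v v),
      J *m J = - 1%:M,
      (forall u v, gR G (J *m u) (J *m v) = gR G u v) &
      (forall u v w z : 'cV[R]_m,
         [/\ RtenR Rc u v w z = - RtenR Rc v u w z,
             RtenR Rc u v w z = - RtenR Rc u v z w,
             RtenR Rc u v w z + RtenR Rc v w u z + RtenR Rc w u v z = 0 &
             RtenR Rc u v (J *m w) (J *m z) = RtenR Rc u v w z])].

Definition gM (m k : nat) (G : 'M[R]_m) (dF : 'M[R]_(m, k)) : 'M[R]_k :=
  dF^T *m G *m dF.

Definition pull_omega (m k : nat) (G J : 'M[R]_m) (dF : 'M[R]_(m, k)) : 'M[R]_k :=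
  dF^T *m J^T *m G *m dF.

(* F^* omega as a skew endomorphism A of T_pM:  g_M(A X, Y) = F^*omega(X,Y) *)
Definition pull_omega_end (m k : nat) (G J : 'M[R]_m) (dF : 'M[R]_(m, k)) : 'M[R]_k :=
  (pull_omega G J dF *m invmx (gM G dF))^T.

Definition Zvec (k : nat) (X Y : 'cV[R]_k) : 'cV[C]_k :=
  (2^-1 : C) *: (toC X - 'i%C *: toC Y).
Definition Zbarvec (k : nat) (X Y : 'cV[R]_k) : 'cV[C]_k :=
  (2^-1 : C) *: (toC X + 'i%C *: toC Y).

End Defs.

(* Main.v *)
Require Import Defs.
From HB Require Import structures.
From mathcomp Require Import all_boot all_order all_algebra.
From mathcomp Require Import reals trigo.
From mathcomp Require Import complex ring lra.
Set Implicit Arguments. Unset Strict Implicit. Unset Printing Implicit Defensive.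
Import Order.TTheory GRing.Theory Num.Theory.
Local Open Scope ring_scope.

Definition kform (F : numFieldType) (m : nat)
  (Rf : 'cV[F]_m -> 'cV[F]_m -> 'cV[F]_m -> 'cV[F]_m -> F) (J : 'M[F]_m) : Prop :=
 [/\ (forall u v w z, Rf u v w z = - Rf v u w z),
     (forall u v w z, Rf u v w z = - Rf u v z w),
     (forall u v w z, Rf u v w z + Rf v w u z + Rf w u v z = 0),
     (forall u v w z, Rf u v (J *m w) (J *m z) = Rf u v w z) &
     (forall u v w a z1 z2, Rf u v w (a *: z1 + z2) = a * Rf u v w z1 + Rf u v w z2)].

Section K.
Variables (F : numFieldType) (m : nat) (Rf : 'cV[F]_m -> 'cV[F]_m -> 'cV[F]_m -> 'cV[F]_m -> F) (J : 'M[F]_m).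
Hypothesis hK : kform Rf J.
Hypothesis hJ : J *m J = -1.

Lemma kA12 u v w z : Rf u v w z = - Rf v u w z. Proof. by case: hK. Qed.
Lemma kA34 u v w z : Rf u v w z = - Rf u v z w. Proof. by case: hK. Qed.
Lemma kB u v w z : Rf u v w z + Rf v w u z + Rf w u v z = 0. Proof. by case: hK. Qed.
Lemma kJ u v w z : Rf u v (J *m w) (J *m z) = Rf u v w z. Proof. by case: hK. Qed.
Lemma kL u v w a z1 z2 : Rf u v w (a *: z1 + z2) = a * Rf u v w z1 + Rf u v w z2.
Proof. by case: hK. Qed.

Lemma R4D u v w z1 z2 : Rf u v w (z1 + z2) = Rf u v w z1 + Rf u v w z2.
Proof. by rewrite -[z1]scale1r kL mul1r scale1r. Qed.
Lemma R40 u v w : Rf u v w 0 = 0.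
Proof. by apply: (addrI (Rf u v w 0)); rewrite addr0 -R4D addr0. Qed.
Lemma R4Z u v w a z : Rf u v w (a *: z) = a * Rf u v w z.
Proof. by rewrite -[a *: z]addr0 kL R40 addr0. Qed.
Lemma R4N u v w z : Rf u v w (- z) = - Rf u v w z.
Proof. by rewrite -scaleN1r R4Z mulN1r. Qed.
Lemma R3D u v w1 w2 z : Rf u v (w1 + w2) z = Rf u v w1 z + Rf u v w2 z.
Proof. by rewrite kA34 R4D opprD -!kA34. Qed.
Lemma R3Z u v a w z : Rf u v (a *: w) z = a * Rf u v w z.
Proof. by rewrite kA34 R4Z -mulrN -kA34. Qed.
Lemma R3N u v w z : Rf u v (- w) z = - Rf u v w z.
Proof. by rewrite -scaleN1r R3Z mulN1r. Qed.

Lemma two_neq0 : (2 : F) != 0.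
Proof. by rewrite pnatr_eq0. Qed.

Lemma lin6 (a b c d e f : F) : a + b + c = 0 -> - b + d + e = 0 ->
  - d + f + c = 0 -> - f - a + e = 0 -> c = - e.
Proof.
move=> h1 h2 h3 h4.
have : (c + e) * 2 = (a + b + c) + (- b + d + e) + (- d + f + c) + (- f - a + e) by ring.
rewrite h1 h2 h3 h4 !addr0 => /eqP; rewrite mulf_eq0 (negbTE two_neq0) orbF addr_eq0.
by move/eqP.
Qed.

Lemma kpair a b c d : Rf a b c d = Rf c d a b.
Proof.
have B1 := kB b c a d.
have B2 := kB c a d b.
have B3 := kB a d b c.
have B4 := kB d b c a.
rewrite (kA34 c a d b) in B2.
rewrite (kA34 a d b c) (kA12 b a d c) (kA34 a b d c) opprK in B3.
rewrite (kA34 d b c a) (kA34 b c d a) (kA12 c d b a) (kA34 d c b a) opprK in B4.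
rewrite (kA12 c d a b).
exact: lin6 B1 B2 B3 B4.
Qed.
Lemma JJ (x : 'cV[F]_m) : J *m (J *m x) = - x.
Proof. by rewrite mulmxA hJ mulNmx mul1mx. Qed.

Lemma R2N u v w z : Rf u (- v) w z = - Rf u v w z.
Proof. by rewrite kpair R4N -kpair. Qed.

Lemma kK U V w z :
  Rf U (J *m V) w (J *m z) = Rf U w V z + Rf U (J *m z) V (J *m w).
Proof.
have B := kB U (J *m V) w (J *m z).
rewrite (kpair (J *m V) w U (J *m z)) -(kJ U (J *m z) (J *m V) w) JJ R3N in B.
rewrite (kJ w U V z) (kA12 w U V z) in B.
move/eqP: B; rewrite -addrA addr_eq0 opprD !opprK => /eqP ->.
by rewrite addrC.
Qed.

Lemma per_mu (U V x y : 'cV[F]_m) (c s2 k i2 : F) :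
  i2 * i2 = -1 -> s2 != 0 -> k * s2 = 4 ->
  s2^-1 * Rf U x V (x + c *: (J *m y)) + s2^-1 * Rf U y V (y - c *: (J *m x))
  + s2^-1 * Rf U (J *m x) V (J *m x - c *: y) + s2^-1 * Rf U (J *m y) V (J *m y + c *: x)
  = k * Rf U (J *m V) (2^-1 *: (x - i2 *: y))
        (J *m (2^-1 *: (x + i2 *: y)) + (c * i2) *: (2^-1 *: (x + i2 *: y))).
Proof.
move=> hi hs0 hk.
have hk' : k = 4 / s2 by rewrite -hk mulfK.
rewrite hk' {hk hk'}.
rewrite -!scalemxAr !(mulmxDr, mulmxBr) -!scalemxAr.
rewrite !(R4D, R4Z, R4N, R3D, R3Z, R3N).
have F1 := kK U V x x.
have F2 := kK U V y y.
have F3 : Rf U (J *m V) y (J *m x) = Rf U (J *m V) x (J *m y).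
  by rewrite kA34 -(kJ U (J *m V) (J *m x) y) JJ R3N opprK.
have F4 : Rf U (J *m V) x y = - Rf U x V (J *m y) + Rf U y V (J *m x).
  by rewrite -[y in LHS]opprK -(JJ y) R4N kK JJ R2N opprD opprK.
have F5 : Rf U (J *m V) x y = Rf U (J *m x) V y - Rf U (J *m y) V x.
  by rewrite -(kJ U (J *m V) x y) kK JJ R4N.
have F6 : Rf U (J *m V) y x = - Rf U (J *m V) x y by rewrite kA34.
have F7 : forall w, Rf U (J *m V) w w = 0.
  move=> w; apply/eqP; have := mulf_eq0 2 (Rf U (J *m V) w w).
  rewrite (negbTE two_neq0) /= => <-.
  by rewrite mulr2n mulrDl mul1r {1}kA34 addNr.
rewrite F1 F2 F3 F6 !F7.
have EA : Rf U x V (J *m y) = Rf U y V (J *m x) - Rf U (J *m V) x y.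
  by rewrite F4 opprD opprK addrC subrK.
have ED : Rf U (J *m y) V x = Rf U (J *m x) V y - Rf U (J *m V) x y.
  by rewrite F5 opprB addrC subrK.
rewrite EA ED.
field: hi.
all: first [exact: two_neq0 | exact: hs0].
Qed.
End K.
Section B.
Variables (R : realType) (m : nat).
Local Notation C := (R[i]).

Lemma sum_delta (K : pzRingType) (a : 'I_m) (F : 'I_m -> K) :
  \sum_(i < m) (delta_mx a 0 : 'cV[K]_m) i 0 * F i = F a.
Proof.
rewrite (bigD1 a) //= big1 => [|i /negbTE ia]; first by rewrite mxE !eqxx mul1r addr0.
by rewrite mxE ia mul0r.
Qed.

Lemma mul_delta (K : pzRingType) (A : 'M[K]_m) (a k : 'I_m) :
  (A *m (delta_mx a 0 : 'cV[K]_m)) k 0 = A k a.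
Proof. by rewrite -colE mxE. Qed.

Lemma RtenR_nested (Rc : 'I_m -> 'I_m -> 'I_m -> 'I_m -> R) (u v w z : 'cV[R]_m) :
  RtenR Rc u v w z = \sum_(i < m) u i 0 * \sum_(j < m) v j 0 *
     \sum_(k < m) w k 0 * \sum_(l < m) z l 0 * Rc i j k l.
Proof.
rewrite /RtenR; apply: eq_bigr => i _; rewrite !mulr_sumr; apply: eq_bigr => j _.
rewrite !mulr_sumr; apply: eq_bigr => k _; rewrite !mulr_sumr; apply: eq_bigr => l _.
ring.
Qed.

Lemma RtenR_delta (Rc : 'I_m -> 'I_m -> 'I_m -> 'I_m -> R) i j k l :
  RtenR Rc (delta_mx i 0) (delta_mx j 0) (delta_mx k 0) (delta_mx l 0) = Rc i j k l.
Proof. by rewrite RtenR_nested !sum_delta. Qed.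

Lemma RtenR_deltaJ (Rc : 'I_m -> 'I_m -> 'I_m -> 'I_m -> R) (J : 'M[R]_m) i j a b :
  RtenR Rc (delta_mx i 0) (delta_mx j 0) (J *m delta_mx a 0) (J *m delta_mx b 0) =
  \sum_(k < m) \sum_(l < m) Rc i j k l * J k a * J l b.
Proof.
rewrite RtenR_nested !sum_delta; apply: eq_bigr => k _; rewrite mulr_sumr.
by apply: eq_bigr => l _; rewrite !mul_delta; ring.
Qed.


Lemma sum3_rot1 (K : nmodType) (F : 'I_m -> 'I_m -> 'I_m -> K) :
  \sum_(i < m) \sum_(j < m) \sum_(k < m) F i j k = \sum_(k < m) \sum_(i < m) \sum_(j < m) F i j k.
Proof.
under eq_bigr => i _ do rewrite exchange_big.
by rewrite exchange_big.
Qed.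

Lemma sum3_rot2 (K : nmodType) (F : 'I_m -> 'I_m -> 'I_m -> K) :
  \sum_(i < m) \sum_(j < m) \sum_(k < m) F i j k = \sum_(j < m) \sum_(k < m) \sum_(i < m) F i j k.
Proof.
rewrite exchange_big.
by under eq_bigr => j _ do rewrite exchange_big.
Qed.

Lemma swap4 (K : nmodType) (F : 'I_m -> 'I_m -> 'I_m -> 'I_m -> K) :
  \sum_(k < m) \sum_(l < m) \sum_(a < m) \sum_(b < m) F k l a b =
  \sum_(a < m) \sum_(b < m) \sum_(k < m) \sum_(l < m) F k l a b.
Proof.
under eq_bigr => k _ do rewrite exchange_big.
under eq_bigr => k _ do under eq_bigr => a _ do rewrite exchange_big.
rewrite exchange_big.
by under eq_bigr => a _ do rewrite exchange_big.
Qed.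

Lemma swap_ijkl (K : nmodType) (F : 'I_m -> 'I_m -> 'I_m -> 'I_m -> K) :
  \sum_(i < m) \sum_(j < m) \sum_(k < m) \sum_(l < m) F i j k l =
  \sum_(j < m) \sum_(l < m) \sum_(i < m) \sum_(k < m) F i j k l.
Proof.
rewrite exchange_big.
by under eq_bigr => j _ do rewrite sum3_rot1.
Qed.

Variable Rc : 'I_m -> 'I_m -> 'I_m -> 'I_m -> R.

Lemma RtenC_nested (u v w z : 'cV[C]_m) :
  RtenC Rc u v w z = \sum_(i < m) u i 0 * \sum_(j < m) v j 0 *
     \sum_(k < m) w k 0 * \sum_(l < m) z l 0 * (Rc i j k l)%:C%C.
Proof.
rewrite /RtenC; apply: eq_bigr => i _; rewrite !mulr_sumr; apply: eq_bigr => j _.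
rewrite !mulr_sumr; apply: eq_bigr => k _; rewrite !mulr_sumr; apply: eq_bigr => l _.
ring.
Qed.

Lemma RtenC_d24 (u v : 'cV[C]_m) j l :
  RtenC Rc u (delta_mx j 0) v (delta_mx l 0) =
  \sum_(i < m) u i 0 * \sum_(k < m) v k 0 * (Rc i j k l)%:C%C.
Proof.
rewrite RtenC_nested; apply: eq_bigr => i _; rewrite sum_delta; congr (_ * _).
apply: eq_bigr => k _; by rewrite sum_delta.
Qed.

Lemma RtenC_expand (u w v z : 'cV[C]_m) :
  RtenC Rc u w v z = \sum_(j < m) \sum_(l < m)
     w j 0 * z l 0 * RtenC Rc u (delta_mx j 0) v (delta_mx l 0).
Proof.
under [RHS]eq_bigr => j _ do under eq_bigr => l _ do rewrite RtenC_d24.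
rewrite /RtenC swap_ijkl; apply: eq_bigr => j _; apply: eq_bigr => l _.
rewrite !mulr_sumr; apply: eq_bigr => i _; rewrite !mulr_sumr; apply: eq_bigr => k _.
ring.
Qed.

Lemma RtenC_lin u v w a (z1 z2 : 'cV[C]_m) :
  RtenC Rc u v w (a *: z1 + z2) = a * RtenC Rc u v w z1 + RtenC Rc u v w z2.
Proof.
rewrite /RtenC mulr_sumr -big_split; apply: eq_bigr => i _.
rewrite mulr_sumr -big_split; apply: eq_bigr => j _.
rewrite mulr_sumr -big_split; apply: eq_bigr => k _.
rewrite mulr_sumr -big_split; apply: eq_bigr => l _.
rewrite !mxE /=; ring.
Qed.

Hypothesis P1 : forall i j k l, Rc i j k l = - Rc j i k l.
Hypothesis P2 : forall i j k l, Rc i j k l = - Rc i j l k.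
Hypothesis P3 : forall i j k l, Rc i j k l + Rc j k i l + Rc k i j l = 0.

Lemma RtenC_A12 (u v w z : 'cV[C]_m) : RtenC Rc u v w z = - RtenC Rc v u w z.
Proof.
rewrite /RtenC [in RHS]exchange_big -sumrN; apply: eq_bigr => i _.
rewrite -sumrN; apply: eq_bigr => j _.
rewrite -sumrN; apply: eq_bigr => k _.
rewrite -sumrN; apply: eq_bigr => l _.
rewrite (P1 i j k l) rmorphN /=; ring.
Qed.

Lemma RtenC_A34 (u v w z : 'cV[C]_m) : RtenC Rc u v w z = - RtenC Rc u v z w.
Proof.
rewrite /RtenC -sumrN; apply: eq_bigr => i _.
rewrite -sumrN; apply: eq_bigr => j _.
rewrite [in RHS]exchange_big -sumrN; apply: eq_bigr => k _.
rewrite -sumrN; apply: eq_bigr => l _.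
rewrite (P2 i j k l) rmorphN /=; ring.
Qed.

Lemma RtenC_B (u v w z : 'cV[C]_m) :
  RtenC Rc u v w z + RtenC Rc v w u z + RtenC Rc w u v z = 0.
Proof.
rewrite /RtenC [X in _ + X + _]sum3_rot1 [X in _ + X]sum3_rot2.
rewrite -!big_split; apply: big1 => a _.
rewrite -!big_split; apply: big1 => b _.
rewrite -!big_split; apply: big1 => c _.
rewrite -!big_split; apply: big1 => l _ /=.
have h := P3 a b c l.
transitivity (((Rc a b c l + Rc b c a l + Rc c a b l)%:C)%C * (u a 0 * v b 0 * w c 0 * z l 0)).
  by rewrite !rmorphD /=; ring.
by rewrite h rmorph0 mul0r.
Qed.

Variable J : 'M[R]_m.
Hypothesis P4 : forall i j a b,
  \sum_(k < m) \sum_(l < m) Rc i j k l * J k a * J l b = Rc i j a b.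

Lemma RtenC_J (u v w z : 'cV[C]_m) :
  RtenC Rc u v (toC J *m w) (toC J *m z) = RtenC Rc u v w z.
Proof.
rewrite /RtenC; apply: eq_bigr => i _; apply: eq_bigr => j _.
have L : forall k l, (Rc i j k l)%:C%C * u i 0 * v j 0 * (toC J *m w) k 0 * (toC J *m z) l 0 =
   \sum_(a < m) \sum_(b < m) ((Rc i j k l)%:C%C * (J k a)%:C%C * (J l b)%:C%C) *
       (u i 0 * v j 0 * w a 0 * z b 0).
  move=> k l; rewrite !mxE -mulrA big_distrlr mulr_sumr; apply: eq_bigr => a _.
  rewrite mulr_sumr; apply: eq_bigr => b _ /=; rewrite !mxE; ring.
under eq_bigr => k _ do under eq_bigr => l _ do rewrite L.
rewrite swap4; apply: eq_bigr => a _; apply: eq_bigr => b _.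
rewrite -(P4 i j a b) rmorph_sum /= !mulr_suml; apply: eq_bigr => k _.
rewrite rmorph_sum /= !mulr_suml; apply: eq_bigr => l _.
rewrite !rmorphM /=; ring.
Qed.

End B.

Lemma kform_RtenC (R : realType) (m : nat) (G J : 'M[R]_m) Rc :
  kaehler_point G J Rc -> kform (RtenC Rc) (toC J).
Proof.
case=> _ _ _ _ H.
have P1 i j k l : Rc i j k l = - Rc j i k l.
  by case: (H (delta_mx i 0) (delta_mx j 0) (delta_mx k 0) (delta_mx l 0)) => h _ _ _;
     rewrite !RtenR_delta in h.
have P2 i j k l : Rc i j k l = - Rc i j l k.
  by case: (H (delta_mx i 0) (delta_mx j 0) (delta_mx k 0) (delta_mx l 0)) => _ h _ _;
     rewrite !RtenR_delta in h.
have P3 i j k l : Rc i j k l + Rc j k i l + Rc k i j l = 0.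
  by case: (H (delta_mx i 0) (delta_mx j 0) (delta_mx k 0) (delta_mx l 0)) => _ _ h _;
     rewrite !RtenR_delta in h.
have P4 i j a b : \sum_(k < m) \sum_(l < m) Rc i j k l * J k a * J l b = Rc i j a b.
  by case: (H (delta_mx i 0) (delta_mx j 0) (delta_mx a 0) (delta_mx b 0)) => _ _ _ h;
     rewrite RtenR_deltaJ RtenR_delta in h.
split.
- exact: RtenC_A12 P1.
- exact: RtenC_A34 P2.
- exact: RtenC_B P3.
- exact: RtenC_J P4.
- exact: RtenC_lin.
Qed.

Lemma cast_sum (K : nmodType) (N M : nat) (e : N = M) (G : 'I_M -> K) :
  \sum_(k < N) G (cast_ord e k) = \sum_(j < M) G j.
Proof. by case: M / e G => G; apply: eq_bigr => k _; rewrite cast_ord_id. Qed.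

Definition pof (n : nat) (k : 'I_(4 * n)) : 'I_4 * 'I_n :=
  enum_val (cast_ord (esym (mxvec_cast 4 n)) k).

Lemma pofK (n : nat) (a : 'I_4) (mu : 'I_n) : pof (mxvec_index a mu) = (a, mu).
Proof. by rewrite /pof /mxvec_index cast_ordK enum_rankK. Qed.

Lemma pof_inj (n : nat) : injective (@pof n).
Proof. by move=> k k' /enum_val_inj /cast_ord_inj. Qed.

Lemma sum_pof (K : nmodType) (n : nat) (F : 'I_4 -> 'I_n -> K) :
  \sum_(k < 4 * n) F (pof k).1 (pof k).2 = \sum_(a < 4) \sum_(mu < n) F a mu.
Proof.
rewrite /pof (cast_sum (esym (mxvec_cast 4 n)) (fun j => F (enum_val j).1 (enum_val j).2)).

rewrite -[LHS](big_enum_val (fun p : ('I_4 * 'I_n)%type => F p.1 p.2)) pair_bigA /=.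
by apply: eq_bigl => p.
Qed.

Lemma trace_change (R : realType) (m : nat) (G B D : 'M[R]_m)
  (T : 'cV[R[i]]_m -> 'cV[R[i]]_m -> R[i]) :
  G^T = G -> B^T *m G *m D = 1%:M ->
  (forall w z, T w z = \sum_(j < m) \sum_(l < m)
       w j 0 * z l 0 * T (delta_mx j 0) (delta_mx l 0)) ->
  \sum_(j < m) \sum_(l < m) (((invmx G) j l)%:C)%C * T (delta_mx j 0) (delta_mx l 0)
  = \sum_(k < m) T (toC (col k B)) (toC (col k D)).
Proof.
move=> Gs hBD hT.
have [BGu Du] := mulmx1_unit hBD.
have Gu : G \in unitmx by move: BGu; rewrite unitmx_mul => /andP[].
have DB : D *m B^T = invmx G.
  have h1 := mulmx1C hBD.
  by rewrite -[D *m B^T]mulmx1 -(mulmxV Gu) mulmxA -(mulmxA D) h1 mul1mx.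
have invs j l : invmx G j l = invmx G l j by rewrite -[in LHS]Gs -trmx_inv mxE.
symmetry; under eq_bigr => k _ do rewrite hT; symmetry.
rewrite sum3_rot2; apply: eq_bigr => j _; apply: eq_bigr => l _.
rewrite -mulr_suml invs -DB mxE rmorph_sum; congr (_ * _); apply: eq_bigr => k _.
rewrite !mxE /= rmorphM /=; ring.
Qed.

Definition bvec (R : realType) (n : nat) (J : 'M[R]_(4 * n)) (dF : 'M[R]_(4 * n, 2 * n))
  (X Y : 'I_n -> 'cV[R]_(2 * n)) (a : 'I_4) (mu : 'I_n) : 'cV[R]_(4 * n) :=
  nth 0 [:: dF *m X mu; dF *m Y mu; J *m (dF *m X mu); J *m (dF *m Y mu)] a.

Definition dvec (R : realType) (n : nat) (J : 'M[R]_(4 * n)) (dF : 'M[R]_(4 * n, 2 * n))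
  (X Y : 'I_n -> 'cV[R]_(2 * n)) (th : 'I_n -> R) (a : 'I_4) (mu : 'I_n) : 'cV[R]_(4 * n) :=
  (sin (th mu) ^+ 2)^-1 *:
  nth 0 [:: dF *m X mu + cos (th mu) *: (J *m (dF *m Y mu));
            dF *m Y mu - cos (th mu) *: (J *m (dF *m X mu));
            J *m (dF *m X mu) - cos (th mu) *: (dF *m Y mu);
            J *m (dF *m Y mu) + cos (th mu) *: (dF *m X mu)] a.

Lemma entry_gR (R : realType) (m : nat) (B G D : 'M[R]_m) k k' :
  (B^T *m G *m D) k k' = gR G (col k B) (col k' D).
Proof.
rewrite /gR tr_col -!row_mul mxE [RHS]mxE [RHS]mxE; apply: eq_bigr => j _.
by rewrite !mxE.
Qed.

Theorem lemma1p1 (R : realType) (n : nat)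
  (G J : 'M[R]_(4 * n)) (Rc : 'I_(4 * n) -> 'I_(4 * n) -> 'I_(4 * n) -> 'I_(4 * n) -> R)
  (dF : 'M[R]_(4 * n, 2 * n))
  (X Y : 'I_n -> 'cV[R]_(2 * n)) (theta : 'I_n -> R) :
  kaehler_point G J Rc ->
  \rank dF = (2 * n)%N ->
  (* {X_a, Y_a} is g_M-orthonormal *)
  (forall a b : 'I_n,
     [/\ gR (gM G dF) (X a) (X b) = (a == b)%:R,
         gR (gM G dF) (Y a) (Y b) = (a == b)%:R &
         gR (gM G dF) (X a) (Y b) = 0]) ->
  (* Kaehler angles theta_a in [0, pi/2], cos decreasing *)
  (forall a : 'I_n, 0 <= theta a <= pi / 2) ->
  (forall a b : 'I_n, (a <= b)%N -> cos (theta b) <= cos (theta a)) ->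
  (* the basis diagonalizes F^* omega *)
  (forall a : 'I_n,
     pull_omega_end G J dF *m X a = cos (theta a) *: Y a /\
     pull_omega_end G J dF *m Y a = - cos (theta a) *: X a) ->
  (* p0 has no complex directions *)
  (forall a : 'I_n, cos (theta a) < 1) ->
  forall U V : 'cV[R[i]]_(4 * n),
    RicciC G Rc U V =
    \sum_(mu < n)
      (((4 / sin (theta mu) ^+ 2)%:C)%C *
       RtenC Rc U (toC J *m V)
         (toC dF *m Zvec (X mu) (Y mu))
         (toC J *m (toC dF *m Zbarvec (X mu) (Y mu))
          + (((cos (theta mu))%:C)%C * 'i%C) *: (toC dF *m Zbarvec (X mu) (Y mu)))).
Proof.
move=> hkp hrank hON hth hmono hdiag hcos1 U V.
have hK := kform_RtenC hkp.
case: hkp => Gs Gpos hJ gJ _.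
have hJc : toC J *m toC J = -1 by rewrite /toC -map_mxM hJ map_mxN map_mx1.
have s2E mu : sin (theta mu) ^+ 2 = 1 - cos (theta mu) ^+ 2 by rewrite sin2cos2.
have s2n0 mu : sin (theta mu) ^+ 2 != 0.
  rewrite s2E; have h1 := hcos1 mu.
  have h0 : 0 <= cos (theta mu).
    apply: cos_ge0_pihalf; case/andP: (hth mu) => ha hb; rewrite hb andbT.
    apply: le_trans ha; rewrite oppr_le0 divr_ge0 // ?pi_ge0 //.
  have h2 : cos (theta mu) ^+ 2 < 1 by rewrite expr2; nra.
  by rewrite subr_eq0 eq_sym (lt_eqF h2).
have s2n0' mu : 1 - cos (theta mu) ^+ 2 != 0 by rewrite -s2E.
have tr00 (A : 'M[R]_1) : A 0 0 = A^T 0 0 by rewrite mxE.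
have gRsym u v : gR G u v = gR G v u.
  by rewrite /gR tr00 !trmx_mul trmxK Gs mulmxA.
have gRD u v w : gR G u (v + w) = gR G u v + gR G u w by rewrite /gR mulmxDr mxE.
have gRZ u a v : gR G u (a *: v) = a * gR G u v by rewrite /gR -scalemxAr mxE.
have gRN u v : gR G u (- v) = - gR G u v by rewrite /gR mulmxN mxE.
have gRZl (M : 'M[R]_(2 * n)) a u v : gR M (a *: u) v = a * gR M u v.
  by rewrite /gR linearZ /= -!scalemxAl mxE.
have gxJ u v : gR G u (J *m v) = - gR G (J *m u) v.
  by rewrite -[LHS]gJ mulmxA hJ mulNmx mul1mx gRN.
have gMrel x y : gR (gM G dF) x y = gR G (dF *m x) (dF *m y).
  by rewrite /gR /gM trmx_mul !mulmxA.
have gMu : gM G dF \in unitmx.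
  rewrite -row_free_unit; apply: inj_row_free => v hv.
  have dFf : row_free dF^T by rewrite /row_free mxrank_tr hrank.
  have hw : gR G (dF *m v^T) (dF *m v^T) = 0.
    by rewrite -gMrel /gR trmxK hv mul0mx mxE.
  have w0 : dF *m v^T = 0.
    by case: (eqVneq (dF *m v^T) 0) => // /Gpos; rewrite hw ltxx.
  apply/eqP; rewrite -(mulmx_free_eq0 _ dFf) -[v]trmxK -trmx_mul w0.
  by apply/eqP/matrixP => i j; rewrite !mxE.
set A := pull_omega_end G J dF.
have Prel x y : gR G (J *m (dF *m x)) (dF *m y) = gR (gM G dF) (A *m x) y.
  rewrite /gR /A /pull_omega_end [in RHS]trmx_mul trmxK.
  move: gMu; set gMm := gM G dF => gMu; clearbody gMm.
  rewrite !mulmxA (mulmxKV gMu).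
  by rewrite /pull_omega !trmx_mul !mulmxA.
have gMsym x y : gR (gM G dF) x y = gR (gM G dF) y x by rewrite !gMrel gRsym.
have E1 a b : gR G (dF *m X a) (dF *m X b) = (a == b)%:R by rewrite -gMrel; case: (hON a b).
have E2 a b : gR G (dF *m Y a) (dF *m Y b) = (a == b)%:R by rewrite -gMrel; case: (hON a b).
have E3 a b : gR G (dF *m X a) (dF *m Y b) = 0 by rewrite -gMrel; case: (hON a b).
have E3' a b : gR G (dF *m Y a) (dF *m X b) = 0 by rewrite gRsym E3.
have E4 a b : gR G (J *m (dF *m X a)) (dF *m X b) = 0.
  by rewrite Prel (proj1 (hdiag a)) gRZl gMsym; case: (hON b a) => _ _ ->; rewrite mulr0.
have E5 a b : gR G (J *m (dF *m X a)) (dF *m Y b) = cos (theta a) * (a == b)%:R.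
  by rewrite Prel (proj1 (hdiag a)) gRZl; case: (hON a b) => _ -> _.
have E6 a b : gR G (J *m (dF *m Y a)) (dF *m X b) = - cos (theta a) * (a == b)%:R.
  by rewrite Prel (proj2 (hdiag a)) gRZl; case: (hON a b) => -> _ _.
have E7 a b : gR G (J *m (dF *m Y a)) (dF *m Y b) = 0.
  by rewrite Prel (proj2 (hdiag a)) gRZl; case: (hON a b) => _ _ ->; rewrite mulr0.
have Gram (a a' : 'I_4) mu nu :
  gR G (bvec J dF X Y a mu) (dvec J dF X Y theta a' nu) =
  ((val a == val a') && (mu == nu))%:R.
{ rewrite /dvec gRZ.
  case: a => [[|[|[|[|?]]]] ?] //; case: a' => [[|[|[|[|?]]]] ?] //=.
  all: rewrite /bvec; cbn [nth nat_of_ord].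
  all: rewrite -?scaleNr.
  all: repeat match goal with
    | |- context [gR _ ?u (?v + ?w)] => rewrite (gRD u v w)
    | |- context [gR _ ?u (?a *: ?v)] => rewrite (gRZ u a v)
    | |- context [gR _ (_ *m ?u) (_ *m ?v)] => rewrite (gJ u v)
    | |- context [gR _ ?u (_ *m ?v)] => rewrite (gxJ u v)
    end.
  all: rewrite ?E1 ?E2 ?E3 ?E3' ?E4 ?E5 ?E6 ?E7.
  all: case: (eqVneq mu nu) => [<-|hne]; rewrite ?eqxx ?(negbTE hne) /= ?s2E.
  all: field; exact: s2n0'. }
pose B : 'M[R]_(4 * n) := \matrix_(r, k) bvec J dF X Y (pof k).1 (pof k).2 r 0.
pose D : 'M[R]_(4 * n) := \matrix_(r, k) dvec J dF X Y theta (pof k).1 (pof k).2 r 0.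
have colB k : col k B = bvec J dF X Y (pof k).1 (pof k).2 by apply/colP => r; rewrite !mxE.
have colD k : col k D = dvec J dF X Y theta (pof k).1 (pof k).2 by apply/colP => r; rewrite !mxE.
have BGD : B^T *m G *m D = 1%:M.
  apply/matrixP => k k'; rewrite entry_gR colB colD Gram mxE.
  congr (_%:R); rewrite -(inj_eq (@pof_inj n)).
  by case: (pof k) (pof k') => [a mu] [a' nu] /=; rewrite xpair_eqE val_eqE.
have TC := trace_change (T := fun w z => RtenC Rc U w V z) Gs BGD
  (fun w z => RtenC_expand _ U w V z).
rewrite /= in TC; rewrite /RicciC TC.
rewrite (eq_bigr (fun k => RtenC Rc U (toC (bvec J dF X Y (pof k).1 (pof k).2)) V
     (toC (dvec J dF X Y theta (pof k).1 (pof k).2)))); last by move=> k _; rewrite colB colD.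
rewrite (sum_pof (fun a mu => RtenC Rc U (toC (bvec J dF X Y a mu)) V
     (toC (dvec J dF X Y theta a mu)))).
rewrite exchange_big; apply: eq_bigr => mu _.
rewrite !big_ord_recl big_ord0 /= addr0 !addrA /bvec /dvec /=.
have hZ : toC dF *m Zvec (X mu) (Y mu) =
    2^-1 *: (toC dF *m toC (X mu) - 'i%C *: (toC dF *m toC (Y mu))).
  by rewrite /Zvec -scalemxAr mulmxBr -scalemxAr.
have hZb : toC dF *m Zbarvec (X mu) (Y mu) =
    2^-1 *: (toC dF *m toC (X mu) + 'i%C *: (toC dF *m toC (Y mu))).
  by rewrite /Zbarvec -scalemxAr mulmxDr -scalemxAr.
rewrite hZ hZb /toC !(map_mxZ, map_mxD, map_mxB, map_mxN, map_mxM) !(R4Z hK) !fmorphV.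

apply: (per_mu hK hJc).
- by rewrite -expr2 sqr_i.
- by rewrite fmorph_eq0 s2n0.
- by rewrite -rmorphM /= divfK // rmorph_nat.
Qed.
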